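(* (Provable in $\mathrm{ACA}_0$.) Let $X$ be a well-quasi-ordered set. Then the relation $<_2$ on $([X]^{<\omega})^{<\omega}$ is well-founded: there is no infinite sequence $s(0)>_2 s(1)>_2 s(2)>_2\cdots$ of elements of $([X]^{<\omega})^{<\omega}$.
   Context: A well-quasi-order is a quasi-order in which every infinite sequence $x_0,x_1,\dots$ has $i<j$ with $x_i\le x_j$. $[X]^{<\omega}$ is the set of finite subsets of $X$ and $([X]^{<\omega})^{<\omega}$ the set of finite sequences of such. On $[X]^{<\omega}$: $\{y_1,\dots,y_n\}\le_1\{z_1,\dots,z_m\}$ iff for every $j\le m$ there is $i\le n$ with $y_i\le z_j$; $<_1$ is its strict part. On $([X]^{<\omega})^{<\omega}$: $\langle\rho_1,\dots,\rho_n\rangle<_2\langle\sigma_1,\dots,\sigma_m\rangle$ iff there is $f:\{1,\dots,n\}\to\{1,\dots,m\}$ such that $\rho_i\le_1\sigma_{f(i)}$ for all $i\le n$, $\rho_i<_1\sigma_{f(i)}$ for some $i\le n$, and $\rho_i<_1\sigma_{f(i)}$ whenever $i\ne j$ and $f(i)=f(j)$. *)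

(* Defs.v *)
From Stdlib Require Import List Arith.
Import ListNotations.

Definition quasi_order {X : Type} (le : X -> X -> Prop) : Prop :=
  (forall x, le x x) /\ (forall x y z, le x y -> le y z -> le x z).

Definition wqo {X : Type} (le : X -> X -> Prop) : Prop :=
  quasi_order le /\
  forall f : nat -> X, exists i j, i < j /\ le (f i) (f j).

(* Finite subsets of X are represented by lists (only membership matters). *)
Definition le1 {X : Type} (le : X -> X -> Prop) (A B : list X) : Prop :=
  forall z, In z B -> exists y, In y A /\ le y z.

Definition lt1 {X : Type} (le : X -> X -> Prop) (A B : list X) : Prop :=
  le1 le A B /\ ~ le1 le B A.

Definition lt2 {X : Type} (le : X -> X -> Prop) (r s : list (list X)) : Prop :=
  exists f : nat -> nat,
    (forall i, i < length r -> f i < length s) /\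
    (forall i, i < length r -> le1 le (nth i r []) (nth (f i) s [])) /\
    (exists i, i < length r /\ lt1 le (nth i r []) (nth (f i) s [])) /\
    (forall i j, i < length r -> j < length r -> i <> j -> f i = f j ->
       lt1 le (nth i r []) (nth (f i) s [])).

(* Main.v *)
Require Import Defs.
From Stdlib Require Import List Arith.
From Stdlib Require Import Lia Classical IndefiniteDescription.
Import ListNotations.


Lemma le1_refl {X} (le : X -> X -> Prop) (Hq : quasi_order le) A : le1 le A A.
Proof. intros z Hz. exists z. split; auto. apply Hq. Qed.

Lemma le1_trans {X} (le : X -> X -> Prop) (Hq : quasi_order le) A B C :
  le1 le A B -> le1 le B C -> le1 le A C.
Proof.
  intros H1 H2 z Hz. destruct (H2 z Hz) as [y [Hy Hyz]].
  destruct (H1 y Hy) as [w [Hw Hwy]]. exists w. split; auto.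
  destruct Hq as [_ Ht]. eauto.
Qed.

Lemma lt1_le_trans {X} (le : X -> X -> Prop) (Hq : quasi_order le) A B C :
  lt1 le A B -> le1 le B C -> lt1 le A C.
Proof.
  intros [H1 N1] H2. split. eapply le1_trans; eauto.
  intro H3. apply N1. eapply le1_trans; eauto.
Qed.

Lemma no_desc1 {X} (le : X -> X -> Prop) (Hw : wqo le) (g : nat -> list X) :
  ~ (forall k, lt1 le (g (S k)) (g k)).
Proof.
  intro H. destruct Hw as [Hq Hf].
  assert (Hx : forall k, exists z, In z (g (S k)) /\ forall y, In y (g k) -> ~ le y z).
  { intro k. destruct (H k) as [_ Hn]. apply NNPP; intro C; apply Hn.
    intros z Hz. apply NNPP; intro C2. apply C. exists z; split; auto.
    intros y Hy Hyz. apply C2. eauto. }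
  pose (x := fun k => proj1_sig (constructive_indefinite_description _ (Hx k))).
  assert (Hxs : forall k, In (x k) (g (S k)) /\ forall y, In y (g k) -> ~ le y (x k)).
  { intro k. unfold x. destruct (constructive_indefinite_description _ _); auto. }
  assert (Hmono : forall i d, le1 le (g (d + i)) (g i)).
  { intros i d; induction d; simpl. apply le1_refl; auto.
    eapply le1_trans; [exact Hq| apply (H (d + i)) | exact IHd]. }
  destruct (Hf x) as [i [j [Hij Hle]]].
  destruct (Hxs i) as [Hi _]. destruct (Hxs j) as [_ Hj].
  assert (H0 : le1 le (g j) (g (S i))).
  { replace j with ((j - S i) + S i) by lia. apply Hmono. }
  destruct (H0 _ Hi) as [y [Hy Hyx]]. apply (Hj y Hy). destruct Hq as [_ Ht]. eauto.
Qed.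

Lemma wf_lt1 {X} (le : X -> X -> Prop) (Hw : wqo le) : forall a, Acc (lt1 le) a.
Proof.
  intro a. apply NNPP. intro Na.
  assert (Hs : forall b : {b | ~ Acc (lt1 le) b},
             {c : {c | ~ Acc (lt1 le) c} | lt1 le (proj1_sig c) (proj1_sig b)}).
  { intros [b Nb]. apply constructive_indefinite_description.
    apply NNPP; intro C. apply Nb. constructor. intros c Hc.
    apply NNPP; intro Nc. apply C. exists (exist _ c Nc). exact Hc. }
  pose (h := fix h n := match n with 0 => exist _ a Na | S n => proj1_sig (Hs (h n)) end).
  apply (no_desc1 le Hw (fun n => proj1_sig (h n))).
  intro k. simpl. exact (proj2_sig (Hs (h k))).
Qed.

Fixpoint anc (F : nat -> nat -> nat) (m d j : nat) : nat :=
  match d with 0 => j | S d => anc F m d (F (d + m) j) end.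

Definition strict {X} (le : X -> X -> Prop) (s : nat -> list (list X)) F k i :=
  lt1 le (nth i (s (S k)) []) (nth (F k i) (s k) []).

Definition ev {X} (le : X -> X -> Prop) s F m j d j' :=
  j' < length (s (S (d + m))) /\ strict le s F (d + m) j' /\ anc F m (S d) j' = j.

Definition Qp {X} (le : X -> X -> Prop) s F m j :=
  forall n, exists d j', n <= d /\ ev le s F m j d j'.

Lemma anc_valid {X} (s : nat -> list (list X)) F
  (Hr : forall k i, i < length (s (S k)) -> F k i < length (s k)) :
  forall m d j, j < length (s (d + m)) -> anc F m d j < length (s m).
Proof. intros m d; induction d; intros j Hj; simpl; auto. Qed.

Lemma anc_top F : forall d m j, anc F m (S d) j = F m (anc F (S m) d j).
Proof.
  induction d; intros m j. reflexivity.
  change (anc F m (S (S d)) j) with (anc F m (S d) (F (S d + m) j)).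
  rewrite IHd. simpl. rewrite <- plus_n_Sm. reflexivity.
Qed.

Lemma ev_shift {X} (le : X -> X -> Prop) s F
  (Hr : forall k i, i < length (s (S k)) -> F k i < length (s k)) m j d j' :
  ev le s F m j (S d) j' ->
  ev le s F (S m) (anc F (S m) (S d) j') d j' /\ F m (anc F (S m) (S d) j') = j /\
  anc F (S m) (S d) j' < length (s (S m)).
Proof.
  intros [H1 [H2 H3]].
  assert (E : S d + m = d + S m) by lia.
  rewrite E in H1, H2.
  split; [|split].
  - split; [|split]; auto.
  - rewrite <- anc_top. exact H3.
  - apply anc_valid; auto.
Qed.

Lemma bound (P : nat -> Prop) (B : nat -> nat -> Prop) K :
  (forall c, c < K -> P c -> exists N, forall d, N <= d -> ~ B c d) ->
  exists N, forall c d, c < K -> P c -> N <= d -> ~ B c d.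
Proof.
  induction K; intros H.
  - exists 0. intros; lia.
  - destruct IHK as [N1 HN1]. { intros; apply H; auto. }
    destruct (classic (P K)) as [PK|NPK].
    + destruct (H K (Nat.lt_succ_diag_r K) PK) as [N2 HN2].
      exists (N1 + N2). intros c d Hc Pc Hd.
      destruct (Nat.eq_dec c K). subst; apply HN2; lia. apply HN1; auto; lia.
    + exists N1. intros c d Hc Pc Hd.
      destruct (Nat.eq_dec c K). subst; contradiction. apply HN1; auto; lia.
Qed.

Lemma notQ {X} (le : X -> X -> Prop) s F m j :
  ~ Qp le s F m j -> exists N, forall d, N <= d -> ~ (exists j', ev le s F m j d j').
Proof.
  intro H. apply NNPP; intro C. apply H. intro n.
  apply NNPP; intro C2. apply C. exists n. intros d Hd [j' Hj']. apply C2. eauto.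
Qed.

Lemma mainA {X} (le : X -> X -> Prop) (Hq : quasi_order le) s F
  (Hr : forall k i, i < length (s (S k)) -> F k i < length (s k))
  (Hle : forall k i, i < length (s (S k)) -> le1 le (nth i (s (S k)) []) (nth (F k i) (s k) []))
  (Hu : forall k i j, i < length (s (S k)) -> j < length (s (S k)) -> i <> j ->
      F k i = F k j -> strict le s F k i) :
  forall a, Acc (lt1 le) a -> forall d m j, le1 le (nth j (s m) []) a ->
    (exists j', ev le s F m j d j') -> ~ Qp le s F m j.
Proof.
  intros a Ha. induction Ha as [a _ IH].
  assert (Hcase : forall m j, le1 le (nth j (s m) []) a ->
     (exists c, c < length (s (S m)) /\ F m c = j /\ strict le s F m c) -> ~ Qp le s F m j).
  { intros m j Hla [c0 [Hc0 [Fc0 Sc0]]] HQ.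
    assert (Hch : forall c, c < length (s (S m)) -> F m c = j ->
               exists N, forall d, N <= d -> ~ (exists j', ev le s F (S m) c d j')).
    { intros c Hc Fc. apply notQ. intro HQc.
      assert (Sc : strict le s F m c).
      { destruct (Nat.eq_dec c c0). subst; auto. apply Hu with c0; auto; congruence. }
      assert (Lc : lt1 le (nth c (s (S m)) []) a).
      { unfold strict in Sc. rewrite Fc in Sc. exact (lt1_le_trans le Hq _ _ _ Sc Hla). }
      destruct (HQc 0) as [d' [j'' [_ Hev']]].
      eapply (IH _ Lc d' (S m) c); eauto. apply le1_refl; auto. }
    destruct (bound (fun c => F m c = j) (fun c d => exists j', ev le s F (S m) c d j')
                (length (s (S m))) Hch) as [N HN].
    destruct (HQ (S N)) as [d [j' [Hd Hev]]].
    destruct d as [|d]. lia.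
    destruct (ev_shift le s F Hr m j d j' Hev) as [E1 [E2 E3]].
    eapply HN; [exact E3 | exact E2 | | exists j'; exact E1]. lia. }
  intro d; induction d as [|d IHd]; intros m j Hla Hev HQ.
  - apply (Hcase m j Hla); auto.
    destruct Hev as [j' [H1 [H2 H3]]]. exists j'. simpl in *. auto.
  - destruct (classic (exists c, c < length (s (S m)) /\ F m c = j /\ strict le s F m c))
      as [Hs|NS].
    + exact (Hcase m j Hla Hs HQ).
    + destruct Hev as [j' Hev].
      destruct (ev_shift le s F Hr m j d j' Hev) as [E1 [E2 E3]].
      set (c := anc F (S m) (S d) j') in *.
      assert (Lc : le1 le (nth c (s (S m)) []) a).
      { eapply le1_trans; [exact Hq| apply Hle; exact E3 |]. rewrite E2. exact Hla. }
      apply (IHd (S m) c Lc (ex_intro _ j' E1)).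
      intro n. destruct (HQ (S n)) as [d2 [j2 [Hd2 Hev2]]].
      destruct d2 as [|d2]. lia.
      destruct (ev_shift le s F Hr m j d2 j2 Hev2) as [G1 [G2 G3]].
      exists d2, j2. split. lia.
      destruct (Nat.eq_dec (anc F (S m) (S d2) j2) c) as [e|ne].
      * rewrite <- e. exact G1.
      * exfalso. apply NS. exists c. split; [exact E3|]. split; [exact E2|].
        apply Hu with (anc F (S m) (S d2) j2); auto. congruence.
Qed.

Theorem lemma2 (X : Type) (le : X -> X -> Prop) (Hwqo : wqo le) :
  ~ exists s : nat -> list (list X), forall k, lt2 le (s (S k)) (s k).
Proof.
  intros [s H].
  pose (F := fun k => proj1_sig (constructive_indefinite_description _ (H k))).
  assert (HF : forall k, let f := F k in
    (forall i, i < length (s (S k)) -> f i < length (s k)) /\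
    (forall i, i < length (s (S k)) -> le1 le (nth i (s (S k)) []) (nth (f i) (s k) [])) /\
    (exists i, i < length (s (S k)) /\ lt1 le (nth i (s (S k)) []) (nth (f i) (s k) [])) /\
    (forall i j, i < length (s (S k)) -> j < length (s (S k)) -> i <> j -> f i = f j ->
       lt1 le (nth i (s (S k)) []) (nth (f i) (s k) []))).
  { intro k. unfold F. destruct (constructive_indefinite_description _ _) as [f Hf]. exact Hf. }
  assert (Hr : forall k i, i < length (s (S k)) -> F k i < length (s k)) by apply HF.
  assert (Hle : forall k i, i < length (s (S k)) ->
     le1 le (nth i (s (S k)) []) (nth (F k i) (s k) [])) by apply HF.
  assert (Hu : forall k i j, i < length (s (S k)) -> j < length (s (S k)) -> i <> j ->
      F k i = F k j -> strict le s F k i) by (intros k; apply HF).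
  assert (Hq : quasi_order le) by apply Hwqo.
  assert (Hch : forall c, c < length (s 0) -> True ->
           exists N, forall d, N <= d -> ~ (exists j', ev le s F 0 c d j')).
  { intros c Hc _. apply notQ. intro HQ.
    destruct (HQ 0) as [d [j' [_ Hev]]].
    eapply (mainA le Hq s F Hr Hle Hu _ (wf_lt1 le Hwqo (nth c (s 0) [])) d 0 c); eauto.
    apply le1_refl; auto. }
  destruct (bound (fun _ => True) (fun c d => exists j', ev le s F 0 c d j')
              (length (s 0)) Hch) as [N HN].
  destruct (HF N) as [_ [_ [[i [Hi Si]] _]]].
  apply (HN (anc F 0 (S N) i) N); auto.
  - apply anc_valid; auto. rewrite Nat.add_0_r. exact Hi.
  - exists i. unfold ev. rewrite Nat.add_0_r. split; [exact Hi|]. split; [exact Si|reflexivity].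
Qed.
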